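(* Under the setting in the context, for every integer $v\ge1$ and every real $a>0$, the number $V$ of false discoveries of the knockoffs procedure with parameter $v$ satisfies $$\Pr\big(V\ge(1+a)v\big)\le\theta(a)^v,\qquad \theta(a)=\frac{(a+2)^{a+2}}{2^{a+2}(a+1)^{a+1}},$$ and $\theta(a)<1$.
   Context: Setting: $p\ge1$; $W_1,\dots,W_p$ are real random variables, almost surely pairwise distinct; $\chi_1,\dots,\chi_p$ take values in $\{-1,0,1\}$; $\mathcal H_0\subseteq\{1,\dots,p\}$ is the set of true nulls, and conditional on $(W_1,\dots,W_p)$ and $(\chi_j)_{j\notin\mathcal H_0}$, the variables $(\chi_j)_{j\in\mathcal H_0}$ are jointly independent and uniform on $\{-1,+1\}$. Knockoffs procedure with parameter $v$: let $\rho$ be the permutation with $W_{\rho(1)}>\cdots>W_{\rho(p)}$; let $j^\star$ be the position of the $v$-th $-1$ in $\chi_{\rho(1)},\dots,\chi_{\rho(p)}$ ($j^\star=p$ if fewer than $v$ entries equal $-1$); reject $\rho(j)$ for all $j\le j^\star$ with $\chi_{\rho(j)}=+1$. $V=\#\{j\in\mathcal H_0: j\text{ rejected}\}$. *)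

(* Defs.v *)
From HB Require Import structures.
From mathcomp Require Import all_boot all_order all_algebra all_fingroup.
From Stdlib Require Import Reals.

Set Implicit Arguments.
Unset Strict Implicit.
Unset Printing Implicit Defensive.

(* The signs +1, 0, -1 as elements of MathComp's int (written with the
   constructors to avoid scope clashes between ring_scope and R_scope). *)
Definition ip1 : int := Posz 1.
Definition i0 : int := Posz 0.
Definition im1 : int := Negz 0.  (* = -1 *)

Definition Rle_b (x y : R) : bool := if Rle_dec x y then true else false.

Definition chi_full (p : nat) (H0 : {set 'I_p}) (chi0 : 'I_p -> int)
  (s : {ffun 'I_p -> bool}) : 'I_p -> int :=
  fun j => if j \in H0 then (if s j then ip1 else im1) else chi0 j.

(* rho i = index with the (i+1)-th largest W (0-based position i).
   jstar0 = 0-based position of the v-th entry equal to -1 in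
   chi (rho 0), ..., chi (rho (p-1)), or p if there are fewer than v such
   entries.  (So the paper's 1-based j* is jstar0+1, resp. p.) *)
Definition jstar0 (p : nat) (rho : {perm 'I_p}) (v : nat) (chi : 'I_p -> int) : nat :=
  let sq := [seq chi (rho i) | i <- enum 'I_p] in
  find (fun i => count (pred1 im1) (take i.+1 sq) == v) (iota 0 p).

Definition rejected (p : nat) (rho : {perm 'I_p}) (v : nat) (chi : 'I_p -> int)
  : {set 'I_p} :=
  [set j | (nat_of_ord ((rho^-1)%g j) <= jstar0 rho v chi)%N && (chi j == ip1)].

Definition false_disc (p : nat) (H0 : {set 'I_p}) (rho : {perm 'I_p}) (v : nat)
  (chi : 'I_p -> int) : nat := #|H0 :&: rejected rho v chi|.

(* Conditional probability (given W and the non-null signs chi0) that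
   V >= (1+a) v, the null signs being i.i.d. uniform on {-1,+1}.  We draw all
   p coins uniformly; only the coordinates in H0 are used, so this is exactly
   the uniform law on {-1,+1}^H0 for the null signs. *)
Definition prob_V_ge (p : nat) (H0 : {set 'I_p}) (rho : {perm 'I_p})
  (chi0 : 'I_p -> int) (v : nat) (a : R) : R :=
  (INR #|[set s : {ffun 'I_p -> bool} |
          Rle_b ((1 + a) * INR v)%R (INR (false_disc H0 rho v (chi_full H0 chi0 s)))]|
   / INR (2 ^ p))%R.

Definition theta (a : R) : R :=
  (Rpower (a + 2) (a + 2) / (Rpower 2 (a + 2) * Rpower (a + 1) (a + 1)))%R.

(* Main.v *)
Require Import Defs.
From HB Require Import structures.
From mathcomp Require Import all_boot all_order all_algebra all_fingroup.
From Stdlib Require Import Reals.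
From mathcomp Require Import Rstruct.
From Stdlib Require Import Lra.
Set Implicit Arguments. Unset Strict Implicit. Unset Printing Implicit Defensive.

Fixpoint F (k : nat) (L : seq (int * bool)) : nat :=
  match L with
  | [::] => 0
  | x :: L' => match k with
     | 0 => 0
     | k'.+1 => if x.1 == ip1 then x.2 + F k L'
                else if x.1 == im1 then F k' L' else F k L'
     end
  end.

Lemma F0 L : F 0 L = 0. Proof. by case: L. Qed.

Lemma find_iotaS (P : pred nat) n :
  find P (iota 0 n.+1) = if P 0 then 0 else (find (fun i => P i.+1) (iota 0 n)).+1.
Proof. by rewrite /= -(add1n 0) iotaDl find_map. Qed.

Lemma jF L k : (1 <= k)%N ->
  count (fun x => (x.1 == ip1) && x.2)
   (take (find (fun i => count (pred1 im1) (take i.+1 (map fst L)) == k) (iota 0 (size L))).+1 L)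
  = F k L.
Proof.
elim: L k => [|[c n] L IH] k hk; first by [].
rewrite [size _]/= find_iotaS.
case: k hk => [//|k] _.
have ne : (im1 == ip1) = false by [].
have E : forall i, count (pred1 im1) (take i.+2 (map fst ((c, n) :: L))) =
   ((c == im1) + count (pred1 im1) (take i.+1 (map fst L)))%N by [].
under eq_find do rewrite E.
rewrite /= (take0).
case: (eqVneq c im1) => [->|n1].
- case: k => [|k].
  + by rewrite /= take0 F0.
  + by rewrite /= {1}/im1 {1}/ip1 /= -(IH k.+1).
- have H0 : forall x, (false + x = x)%N by [].
  rewrite /=; under eq_find do rewrite add0n. rewrite -IH //.
  by case: (c == ip1).
Qed.

Lemma card_cnt (T : finType) (P : pred T) : #|[set x | P x]| = count P (enum T).
Proof. rewrite cardE size_filter enumT. by apply/eq_count => x; rewrite /= inE. Qed.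

Lemma cnt_take_gen p n (Q : pred 'I_p) (s : seq 'I_p) m :
  map val s = iota m (size s) ->
  count (fun i : 'I_p => (i < n)%N && Q i) s = count Q (take (n - m) s).
Proof.
elim: s m => [|x s IH] m //= [hx hs].
rewrite (IH m.+1 hs) hx.
case: (ltnP m n) => hmn.
- rewrite (_ : n - m = (n - m.+1).+1)%N /=; last by rewrite subnSK.
  by [].
- rewrite (_ : n - m = 0)%N; last by apply/eqP; rewrite subn_eq0.
  by rewrite (_ : n - m.+1 = 0)%N ?take0 //; apply/eqP; rewrite subn_eq0 ltnW.
Qed.

Lemma cnt_take_ord p n (Q : pred 'I_p) :
  count (fun i : 'I_p => (i < n)%N && Q i) (enum 'I_p) = count Q (take n (enum 'I_p)).
Proof. by rewrite (@cnt_take_gen p n Q _ 0) ?subn0 // val_enum_ord size_enum_ord. Qed.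

Definition Lof p (H0 : {set 'I_p}) (rho : {perm 'I_p}) (chi : 'I_p -> int) :=
  [seq (chi (rho i), rho i \in H0) | i <- enum 'I_p].

Lemma fd_F p (H0 : {set 'I_p}) (rho : {perm 'I_p}) v (chi : 'I_p -> int) :
  (1 <= v)%N -> false_disc H0 rho v chi = F v (Lof H0 rho chi).
Proof.
move=> hv; rewrite -jF //.
have -> : find (fun i => count (pred1 im1) (take i.+1 (map fst (Lof H0 rho chi))) == v)
   (iota 0 (size (Lof H0 rho chi))) = jstar0 rho v chi.
  by rewrite /jstar0 /Lof -map_comp size_map size_enum_ord.
rewrite /false_disc -(card_preimset _ (@perm_inj _ rho)).
rewrite (_ : rho @^-1: _ = [set i : 'I_p | (i < (jstar0 rho v chi).+1)%N && ((chi (rho i) == ip1) && (rho i \in H0))]); last first.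
  apply/setP => i; rewrite !inE permK ltnS.
  by case: (rho i \in H0); case: (_ <= _)%N; case: (_ == _).
rewrite card_cnt cnt_take_ord /Lof -(map_take _ (fun i => (chi (rho i), rho i \in H0))) count_map.
by apply/eq_count => i /=.
Qed.
Section BPart.
Import Order.TTheory GRing.Theory Num.Theory.
Local Open Scope ring_scope.

Section Sums.
Variable p : nat.
Variables (H0 : {set 'I_p}) (chi0 : 'I_p -> int).
Notation FF := {ffun 'I_p -> bool}.

Definition fl (j : 'I_p) (s : FF) : FF := [ffun x => if x == j then ~~ s j else s x].

Lemma flK j : involutive (fl j).
Proof. move=> s; apply/ffunP => x; rewrite !ffunE; case: eqP => [->|]; by rewrite ?eqxx ?negbK. Qed.

Lemma fl_j j s : fl j s j = ~~ s j.
Proof. by rewrite ffunE eqxx. Qed.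

Lemma half j (g : FF -> R) : (forall s, g (fl j s) = g s) ->
  \sum_(s : FF) (if s j then g s else 0) = \sum_(s : FF) (if s j then 0 else g s).
Proof.
move=> hg; rewrite (reindex_inj (inv_inj (flK j))) /=.
by apply: eq_bigr => s _; rewrite fl_j hg; case: (s j).
Qed.

Lemma half2 j (g : FF -> R) : (forall s, g (fl j s) = g s) ->
  \sum_(s : FF) (if s j then g s else 0) = (\sum_(s : FF) g s) / 2.
Proof.
move=> hg.
have -> : \sum_(s : FF) g s = \sum_(s : FF) (if s j then g s else 0) + \sum_(s : FF) (if s j then 0 else g s).
  by rewrite -big_split /=; apply: eq_bigr => s _; case: (s j); rewrite ?addr0 ?add0r.
rewrite -half //; set S := \sum_(s : FF) _; rewrite -mulr2n -(mulr_natr S) mulfK // pnatr_eq0.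
by []. Qed.

Definition Lr (s : FF) (r : seq 'I_p) := [seq (chi_full H0 chi0 s j, j \in H0) | j <- r].

Lemma Lr_fl j s r : j \notin r -> Lr (fl j s) r = Lr s r.
Proof.
move=> hj; apply/eq_in_map => x hx /=; rewrite /chi_full ffunE.
by rewrite (_ : (x == j) = false) //; apply: contraNF hj => /eqP <-.
Qed.

Variables (z c : R).
Hypotheses (hz : 0 <= z) (hc : 1 <= c) (hzc : z * c + 1 <= 2 * c).

Lemma sum_bound (r : seq 'I_p) : uniq r -> forall k,
  \sum_(s : FF) z ^+ F k (Lr s r) <= #|FF|%:R * c ^+ k.
Proof.
have c0 : 0 <= c by apply: le_trans hc.
have cexp : forall k, c ^+ k <= c ^+ k.+1.
  by move=> k; rewrite exprS ler_peMl // exprn_ge0.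
have N0 : 0 <= #|FF|%:R :> R by [].
elim: r => [|j r IH] hu k.
  rewrite (eq_bigr (fun _ => 1)); last by move=> s _; case: k.
  rewrite sumr_const -[X in X <= _]mulr1 ler_wpM2l //.
  by apply: exprn_ege1.
move: hu => /= /andP [hj hu].
case: k => [|k].
  rewrite (eq_bigr (fun _ => 1)); last by move=> s _.
  by rewrite sumr_const expr0 mulr1.
case: (boolP (j \in H0)) => hjH.
- have E : forall s : FF, z ^+ F k.+1 (Lr s (j :: r)) =
     (if s j then z * z ^+ F k.+1 (Lr s r) else 0) + (if s j then 0 else z ^+ F k (Lr s r)).
    move=> s; rewrite /Lr /= /chi_full hjH.
    by case: (s j) => /=; rewrite ?addr0 ?add0r // add1n exprS.
  rewrite (eq_bigr (fun s : FF => (if s j then z * z ^+ F k.+1 (Lr s r) else 0) + (if s j then 0 else z ^+ F k (Lr s r)))); last first.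
    by move=> s _; rewrite /chi_full hjH; case: (s j) => /=; rewrite ?addr0 ?add0r // add1n exprS.
  rewrite big_split /=.
  rewrite (half2 (g := fun s => z * z ^+ F k.+1 (Lr s r))); last first.
    by move=> s; rewrite Lr_fl.
  rewrite -half; last by move=> s; rewrite Lr_fl.
  rewrite (half2 (g := fun s => z ^+ F k (Lr s r))); last first.
    by move=> s; rewrite Lr_fl.
  rewrite -mulr_sumr.
  have h1 := IH hu k.+1. have h2 := IH hu k.
  set A := \sum_(s : FF) _ in h1. set B := \sum_(s : FF) _ in h2.
  rewrite -/A -/B.
  have e : #|FF|%:R * c ^+ k.+1 = (#|FF|%:R * c ^+ k) * c by rewrite exprSr mulrA.
  have ck0 : 0 <= #|FF|%:R * c ^+ k by rewrite mulr_ge0 // exprn_ge0.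
  set M := #|FF|%:R * c ^+ k in ck0 h2 e *.
  rewrite e.
  have h1' : A <= M * c by rewrite -e.
  have p1 : z * A <= z * (M * c) by rewrite ler_wpM2l.
  have p2 : M * (z * c + 1) <= M * (2 * c) by rewrite ler_wpM2l.
  have q : z * A + B <= M * (2 * c).
    apply: le_trans (lerD p1 h2) _.
    by rewrite (_ : z * (M * c) + M = M * (z * c + 1)) // mulrDr mulr1 mulrCA.
  rewrite -mulrDl ler_pdivrMr ?ltr0n //.
  by rewrite -mulrA (mulrC c).
- have E : forall s : FF, z ^+ F k.+1 (Lr s (j :: r)) =
     if chi0 j == ip1 then z ^+ F k.+1 (Lr s r) else
     if chi0 j == im1 then z ^+ F k (Lr s r) else z ^+ F k.+1 (Lr s r).
    move=> s; rewrite /Lr /= /chi_full (negbTE hjH) /=.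
    by case: (chi0 j == ip1) => //; case: (chi0 j == im1).
  rewrite (eq_bigr (fun s : FF => if chi0 j == ip1 then z ^+ F k.+1 (Lr s r) else if chi0 j == im1 then z ^+ F k (Lr s r) else z ^+ F k.+1 (Lr s r))); last first.
    by move=> s _; rewrite /chi_full (negbTE hjH); case: (chi0 j == ip1); case: (chi0 j == im1).
  case: (chi0 j == ip1); first exact: IH hu k.+1.
  case: (chi0 j == im1); last exact: IH hu k.+1.
  apply: le_trans (IH hu k) _.
  by rewrite ler_wpM2l.
Qed.

Lemma sum_fd (rho : {perm 'I_p}) (v : nat) : leq 1 v ->
  \sum_(s : FF) z ^+ false_disc H0 rho v (chi_full H0 chi0 s) <= #|FF|%:R * c ^+ v.
Proof.
move=> hv.
have uniq_r : uniq [seq rho i | i <- enum 'I_p].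
  by rewrite map_inj_uniq ?enum_uniq //; apply: perm_inj.
apply: le_trans (sum_bound uniq_r v).
rewrite le_eqVlt; apply/orP; left; apply/eqP.
apply: eq_bigr => s _; rewrite fd_F //.
by rewrite /Lr /Lof [RHS]/= -map_comp.
Qed.
End Sums.

Lemma count_bound (T : finType) (A : {set T}) (f : T -> R) (K : R) :
  (forall s, 0 <= f s) -> (forall s, s \in A -> K <= f s) ->
  #|A|%:R * K <= \sum_(s : T) f s.
Proof.
move=> f0 hK.
rewrite mulr_natl -sumr_const big_mkcond /=.
apply: ler_sum => s _; case: ifP => hs; [exact: hK | exact: f0].
Qed.


Definition Ssum p (H0 : {set 'I_p}) (chi0 : 'I_p -> int) (rho : {perm 'I_p}) (v : nat) (z : R) :=
  \sum_(s : {ffun 'I_p -> bool}) z ^+ false_disc H0 rho v (chi_full H0 chi0 s).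

Lemma sum_fd_R p (H0 : {set 'I_p}) (chi0 : 'I_p -> int) (rho : {perm 'I_p}) (v : nat) (z c : R) :
  Rle 0 z -> Rle 1 c -> Rle (Rplus (Rmult z c) 1) (Rmult 2 c) -> leq 1 v ->
  Rle (Ssum H0 chi0 rho v z) (Rmult (INR #|{ffun 'I_p -> bool}|) (pow c v)).
Proof.
move=> /RleP h1 /RleP h2 /RleP h3 hv; apply/RleP.
by rewrite INRE RpowE; apply: sum_fd.
Qed.

Lemma count_bound_R p (H0 : {set 'I_p}) (chi0 : 'I_p -> int) (rho : {perm 'I_p}) (v : nat) (z K : R)
  (A : {set {ffun 'I_p -> bool}}) :
  Rle 0 z ->
  (forall s, s \in A -> Rle K (pow z (false_disc H0 rho v (chi_full H0 chi0 s)))) ->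
  Rle (Rmult (INR #|A|) K) (Ssum H0 chi0 rho v z).
Proof.
move=> /RleP hz hK; apply/RleP; rewrite INRE.
apply: count_bound.
- by move=> s; rewrite exprn_ge0.
- by move=> s /hK /RleP; rewrite RpowE.
Qed.

End BPart.
Ltac slra := Stdlib.micromega.Lra.lra.
Section CPart.
Local Open Scope R_scope.

Lemma theta_exp a : 0 < a ->
  theta a = exp (ln ((a+2)/2) - (a+1) * ln (2*(a+1)/(a+2))).
Proof.
intro ha.
assert (E1 : ln ((a+2)/2) = ln (a+2) - ln 2).
{ unfold Rdiv.
  have g1 : 0 < a + 2 by slra. have g2 : 0 < / 2 by apply Rinv_0_lt_compat; slra.
  have g3 : 0 < 2 by slra.
  rewrite (ln_mult _ _ g1 g2) (ln_Rinv _ g3); slra. }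
assert (E2 : ln (2*(a+1)/(a+2)) = ln 2 + ln (a+1) - ln (a+2)).
{ unfold Rdiv.
  assert (h1 : 0 < 2 * (a+1)) by slra. assert (h2 : 0 < / (a+2)) by (apply Rinv_0_lt_compat; slra).
  have g1 : 0 < 2 by slra. have g2 : 0 < a + 1 by slra. have g3 : 0 < a + 2 by slra.
  rewrite (ln_mult _ _ h1 h2) (ln_mult _ _ g1 g2) (ln_Rinv _ g3); slra. }
rewrite E1 E2. unfold theta, Rpower.
replace ((ln (a + 2) - ln 2) - (a + 1) * (ln 2 + ln (a + 1) - ln (a + 2)))
  with ((a+2) * ln (a+2) + - ((a+2) * ln 2) + - ((a+1) * ln (a+1))) by ring.
rewrite !exp_plus !exp_Ropp.
field. split; apply Rgt_not_eq, exp_pos.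
Qed.

Lemma theta_lt1 a : 0 < a -> theta a < 1.
Proof.
intro ha. rewrite (theta_exp ha).
apply Rlt_le_trans with (exp 0); [apply exp_increasing | rewrite exp_0; slra].
assert (H1 : ln ((a+2)/2) < a/2).
{ rewrite -(ln_exp (a/2)). apply ln_increasing. slra.
  replace ((a+2)/2) with (1 + a/2) by field. apply exp_ineq1. slra. }
set t := a / (2*(a+1)).
assert (Ht : 0 < t). { unfold t. apply Rdiv_lt_0_compat; slra. }
assert (H2 : - ln (2*(a+1)/(a+2)) < - t).
{ rewrite -ln_Rinv. rewrite -(ln_exp (- t)). apply ln_increasing.
  apply Rinv_0_lt_compat. apply Rdiv_lt_0_compat; slra.
  replace (/ (2 * (a + 1) / (a + 2))) with (1 + - t).
  apply exp_ineq1. slra.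
  unfold t. field. slra.
  apply Rdiv_lt_0_compat; slra. }
assert (H3 : (a+1) * t = a/2). { unfold t. field. slra. }
assert (H4 : (a+1) * (- ln (2*(a+1)/(a+2))) < (a+1) * (- t)).
{ apply Rmult_lt_compat_l; slra. }
slra.
Qed.

Lemma ratio_eq a : 0 < a ->
  ((a+2)/2) / Rpower (2*(1+a)/(2+a)) (1+a) = theta a.
Proof.
intro ha. rewrite (theta_exp ha). unfold Rpower.
replace (2*(1+a)/(2+a)) with (2*(a+1)/(a+2)) by (f_equal; [f_equal; ring| ring]).
replace (1+a) with (a+1) by ring.
unfold Rminus. rewrite exp_plus exp_ln ?exp_Ropp. reflexivity.
apply Rdiv_lt_0_compat; slra.
Qed.

End CPart.

Lemma natpow2 p : Nat.pow 2 p = expn 2 p.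
Proof. elim: p => [//|p IH] /=. by rewrite expnS IH mulnE. Qed.

Unset Implicit Arguments. Set Strict Implicit.
Theorem corollary1 (p : nat) (H0 : {set 'I_p}) (W : 'I_p -> R)
  (rho : {perm 'I_p}) (chi0 : 'I_p -> int) (v : nat) (a : R) :
  (1 <= p)%N ->
  (forall i i' : 'I_p, (i < i')%N -> (W (rho i') < W (rho i))%R) ->
  (forall j, j \notin H0 -> chi0 j \in [:: im1; i0; ip1]) ->
  (1 <= v)%N ->
  (0 < a)%R ->
  (prob_V_ge H0 rho chi0 v a <= theta a ^ v)%R /\ (theta a < 1)%R.
Proof.
move=> hp _ _ hv ha.
split; last exact: theta_lt1.
set z := (2*(1+a)/(2+a))%R.
set c := ((a+2)/2)%R.
have hz0 : (0 < z)%R.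
  rewrite /z. apply Rdiv_lt_0_compat; slra.
have hz1 : (1 <= z)%R.
  rewrite /z. apply (Rmult_le_reg_r (2+a)); first slra.
  rewrite /Rdiv Rmult_assoc Rinv_l; slra.
have hc1 : (1 <= c)%R by rewrite /c; slra.
have hzc : (z * c + 1 = 2 * c)%R by rewrite /z /c; field; slra.
have SB := @sum_fd_R p H0 chi0 rho v z c ltac:(slra) ltac:(slra) ltac:(slra) hv.
set K := Rpower z ((1+a) * INR v).
set A := [set s : {ffun 'I_p -> bool} | Rle_b ((1 + a) * INR v)%R (INR (false_disc H0 rho v (chi_full H0 chi0 s)))].
have CB : (INR #|A| * K <= Ssum H0 chi0 rho v z)%R.
  apply: count_bound_R; first slra.
  move=> s; rewrite inE /Rle_b; case: Rle_dec => // hle _.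
  rewrite -Rpower_pow //. apply: Rle_Rpower => //.
have hN : INR (Nat.pow 2 p) = INR #|{ffun 'I_p -> bool}|.
  by rewrite natpow2 card_ffun card_bool card_ord.
set T := Rpower z (1+a).
have hT : (0 < T)%R by rewrite /T /Rpower; apply: exp_pos.
have hK : K = (T ^ v)%R by rewrite /K /T -Rpower_mult Rpower_pow.
have ht : theta a = (c / T)%R by rewrite -ratio_eq.
set N := INR #|{ffun 'I_p -> bool}|.
have hN0 : (0 < N)%R.
  rewrite /N -hN natpow2; apply: lt_0_INR; apply/ltP; by rewrite expn_gt0.
have hTv : (0 < T ^ v)%R by apply: pow_lt.
rewrite /prob_V_ge -/A hN ht.
rewrite hK in CB.
have E1 : ((c / T) ^ v = c ^ v / T ^ v)%R by rewrite /Rdiv Rpow_mult_distr pow_inv.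
rewrite E1.
have E2 : (INR #|A| / N = (INR #|A| * T ^ v) / (N * T ^ v))%R by field; split; slra.
have E3 : (c ^ v / T ^ v = (N * c ^ v) / (N * T ^ v))%R by field; split; slra.
rewrite E2 E3 /Rdiv.
apply: Rmult_le_compat_r.
  by apply/Rlt_le/Rinv_0_lt_compat/Rmult_lt_0_compat.
by apply: Rle_trans CB SB.
Qed.
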